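(* Assume the Hashimoto matrix $B$ is irreducible, $\mathbf{p}\in(0,1]^E$, and $\rho:=\rho\big(B^T\mathrm{diag}(\mathbf{p})\big)>1$. Then there exists $\mathbf{Q}\in[0,1]^E\setminus\{\mathbf{1}\}$ with $\mathbf{Q}=\mathbf{F}(\mathbf{Q};\mathbf{p})$.
   Context: $\mathcal{G}=(V,E)$ is a finite directed graph, edges written $i\to j$, $M=|E|$; $\mathcal{N}^-(j)=\{k:\,k\to j\in E\}$. The Hashimoto matrix is $B_{i\to j,\,k\to l}=\delta_{jk}(1-\delta_{il})$; irreducibility means the directed graph on $E$ with an arc $e\to e'$ whenever $B_{e,e'}\neq0$ is strongly connected. $\rho$ denotes spectral radius. For $\mathbf{p}\in[0,1]^E$, $\mathbf{F}(\cdot;\mathbf{p}):[0,1]^E\to[0,1]^E$ is defined componentwise: for the edge $j\to i$, $$F_{j\to i}(\mathbf{y};\mathbf{p})=\prod_{k\in\mathcal{N}^-(j)\setminus\{i\}}\big(1-p_{k\to j}+p_{k\to j}\,y_{k\to j}\big)$$ (empty product $=1$); its Jacobian at $\mathbf{1}$ is $B^T\mathrm{diag}(\mathbf{p})$. $\mathbf{1}$ is the all-ones vector, always a fixed point of $\mathbf{F}$. *)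

(* Defs.v *)
From HB Require Import structures.
From mathcomp Require Import all_boot all_order all_algebra.
From mathcomp Require Import fingraph.
From mathcomp Require Import boolp classical_sets reals.
From mathcomp Require Import complex.

Set Implicit Arguments.
Unset Strict Implicit.
Unset Printing Implicit Defensive.

Import Order.TTheory GRing.Theory Num.Theory.
Local Open Scope ring_scope.
Local Open Scope classical_set_scope.

Definition edge (V : finType) (adj : rel V) := {e : V * V | adj e.1 e.2}.

Section Hashimoto.
Variables (V : finType) (adj : rel V).
Local Notation E := (edge adj).

Definition etail (e : E) : V := (val e).1.
Definition ehead (e : E) : V := (val e).2.

Definition hashimoto (R : pzRingType) (e f : E) : R :=
  ((ehead e == etail f) && (etail e != ehead f))%:R.

(* irreducibility: the digraph on E with an arc e -> f whenever B_{e,f} <> 0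
   is strongly connected *)
Definition hashimoto_irreducible (R : pzRingType) : Prop :=
  forall e f : E, connect (fun x y : E => hashimoto R x y != 0) e f.

(* The |E| x |E| matrix B^T diag(p), indexed through an enumeration of E *)
Definition jacobian (R : pzRingType) (p : E -> R) : 'M[R]_#|{: E}| :=
  \matrix_(i, j) (hashimoto R (enum_val j) (enum_val i) * p (enum_val j)).

(* F(y; p) componentwise: for the edge j -> i, the product over
   k in N^-(j) \ {i} of (1 - p_{k->j} + p_{k->j} y_{k->j}) *)
Definition Fmap (R : pzRingType) (p y : E -> R) (e : E) : R :=
  \prod_(f : E | (ehead f == etail e) && (etail f != ehead e))
     (1 - p f + p f * y f).

End Hashimoto.

Definition cmod (R : rcfType) (z : R[i]) : R :=
  let: Complex a b := z in Num.sqrt (a ^+ 2 + b ^+ 2).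

Definition spectral_radius (R : realType) (n : nat) (A : 'M[R]_n) : R :=
  sup [set cmod z | z in [set z : R[i] |
        eigenvalue (map_mx (fun x : R => (x%:C)%C) A) z]].

(* Main.v *)
Require Import Defs.
From HB Require Import structures.
From mathcomp Require Import all_boot all_order all_algebra.
From mathcomp Require Import fingraph.
From mathcomp Require Import boolp classical_sets reals.
From mathcomp Require Import complex.
From mathcomp Require Import ring lra.
Import Order.TTheory GRing.Theory Num.Theory.
Local Open Scope ring_scope.
Local Open Scope classical_set_scope.
Set Implicit Arguments. Unset Strict Implicit.

Lemma normC_Re (R : rcfType) (z : R[i]) : `|z| = ((complex.Re `|z|)%:C)%C.
Proof. by rewrite {1}normc_def normc_def. Qed.

Lemma cmodE (R : rcfType) (z : R[i]) : cmod z = complex.Re `|z|.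
Proof. by case: z => a b; rewrite normc_def. Qed.

Lemma eig_tr (F : fieldType) n (A : 'M[F]_n) a : eigenvalue A a ->
  exists2 w : 'rV[F]_n, w != 0 & forall i, \sum_j w 0 j * A i j = a * w 0 i.
Proof.
move=> /eigenvalueP [v Hv v0].
have : \det (A - a%:M) == 0.
  apply/det0P; exists v => //; by rewrite mulmxBr Hv mul_mx_scalar subrr.
rewrite -det_tr => /det0P [w w0 Hw]; exists w => // i.
have := congr1 (fun M : 'M_(1,n) => M 0 i) Hw; rewrite !mxE.
rewrite (eq_bigr (fun j => w 0 j * A i j - w 0 j * (a%:M i j))); last first.
  by move=> j _; rewrite !mxE mulrBr.
have Hs : \sum_j w 0 j * a%:M i j = a * w 0 i.
  rewrite (bigD1 i) //= big1 ?addr0; last first.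
    by move=> j /negbTE ji; rewrite mxE eq_sym ji mulr0.
  by rewrite mxE eqxx mulr1n mulrC.
by rewrite sumrB Hs => /eqP; rewrite subr_eq0 => /eqP.
Qed.

Lemma Re_norm_ge0 (R : rcfType) (z : R[i]) : 0 <= complex.Re `|z|.
Proof. have := normr_ge0 z; rewrite {1}normC_Re => H; rewrite -lecR; exact: H. Qed.

Lemma sum_ordE (R : pzRingType) (T : finType) (G : 'I_#|{: T}| -> R) :
  \sum_(j < #|{: T}|) G j = \sum_(f : T) G (enum_rank f).
Proof.
rewrite (reindex (@enum_rank T)) //=.
by exists enum_val => x _; [rewrite enum_rankK | rewrite enum_valK].
Qed.

Lemma step1 (R : realType) (V : finType) (adj : rel V) (p : edge adj -> R) :
  (forall e, 0 <= p e) -> 1 < spectral_radius (jacobian p) ->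
  exists mu (u : edge adj -> R), 1 < mu /\ (forall e, 0 <= u e) /\
    (exists e, u e != 0) /\
    (forall e, mu * u e <= \sum_f hashimoto R f e * p f * u f).
Proof.
move=> p0; rewrite /spectral_radius.
set S := [set _ | _ in _].
have [S0|S0] := pselect (S !=set0); last first.
  have -> : S = set0 by apply/seteqP; split => x // Sx; case: S0; exists x.
  by rewrite sup0 ltr10.
move=> /(sup_gt S0) [y [z /= Hz <-]].
rewrite cmodE => mu1.
have [w w0 Hw] := eig_tr Hz.
exists (complex.Re `|z|), (fun e => complex.Re `|w 0 (enum_rank e)|).
split => //; split.
  by move=> e; apply: Re_norm_ge0.
split.
  have /rV0Pn [i wi] := w0; exists (enum_val i); rewrite enum_valK.
  apply: contra wi => /eqP H; rewrite -normr_eq0 normC_Re H //.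
move=> e; rewrite -lecR rmorphM /= -!normC_Re -normrM -Hw.
rewrite rmorph_sum /= sum_ordE.
apply: (le_trans (ler_norm_sum _ _ _)); apply: ler_sum => f _.
rewrite !mxE !enum_rankK normrM mulrC !rmorphM /= -normC_Re; apply: ler_pM => //.
rewrite ger0_norm // ?rmorphM //.
by rewrite -rmorphM /= lecR mulr_ge0.
Qed.

Section Step2.
Variables (R : realFieldType) (T : finType) (a : T -> T -> R) (r : rel T).
Hypothesis a0 : forall e f, 0 <= a e f.
Hypothesis ar : forall e f, r f e -> 0 < a e f.
Hypothesis conn : forall e f, connect r e f.
Variable mu : R.
Hypothesis mu0 : 0 <= mu.

Definition Lop (x : T -> R) (e : T) : R := \sum_f a e f * x f.
Definition Good (x : T -> R) :=
  (forall e, 0 <= x e) /\ forall e, mu * x e <= Lop x e.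

Lemma Lop_ge0 x : (forall e, 0 <= x e) -> forall e, 0 <= Lop x e.
Proof. by move=> x0 e; apply: sumr_ge0 => f _; apply: mulr_ge0. Qed.

Lemma Good_L x : Good x -> Good (Lop x).
Proof.
move=> [x0 xL]; split; first exact: Lop_ge0.
move=> e; rewrite /Lop mulr_sumr; apply: ler_sum => f _.
by rewrite mulrCA; apply: ler_wpM2l.
Qed.

Lemma Good_iter x k : Good x -> Good (iter k Lop x).
Proof. by move=> gx; elim: k => //= k IH; apply: Good_L. Qed.

Lemma Good_sum (X : T -> T -> R) : (forall g, Good (X g)) ->
  Good (fun e => \sum_g X g e).
Proof.
move=> gX; split.
  by move=> e; apply: sumr_ge0 => g _; case: (gX g).
move=> e; rewrite mulr_sumr.
apply: (le_trans (ler_sum _ (fun g _ => (gX g).2 e))).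
rewrite /Lop exchange_big /= le_eqVlt; apply/orP; left; apply/eqP/eq_bigr => f _.
by rewrite mulr_sumr.
Qed.

Lemma step2 (u : T -> R) : Good u -> (exists e, u e != 0) ->
  exists v, (forall e, 0 < v e) /\ Good v.
Proof.
move=> gu [e0 ue0].
have reach : forall e, exists k, 0 < iter k Lop u e.
  move=> e; have /connectP [s rs ->] := conn e0 e.
  have : exists k, 0 < iter k Lop u e0.
    by exists 0%N; rewrite /= lt_def ue0 (gu.1 e0).
  elim: s e0 rs {ue0} => [|g s IH] x //= /andP [rxg rs] [k Hk].
  apply: (IH g rs); exists k.+1 => /=.
  rewrite /Lop (bigD1 x) //=; apply: ltr_wpDr.
    apply: sumr_ge0 => f _; apply: mulr_ge0 => //.
    by case: (Good_iter k gu) => + _; apply.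
  by apply: mulr_gt0 => //; apply: ar.
have [k Hk] := fin_all_exists reach.
exists (fun e => \sum_g iter (k g) Lop u e); split; last first.
  by apply: Good_sum => g; apply: Good_iter.
move=> e; rewrite (bigD1 e) //=; apply: ltr_wpDr => //.
by apply: sumr_ge0 => g _; case: (Good_iter (k g) gu) => + _; apply.
Qed.
End Step2.

Lemma prod_bound (R : realFieldType) (I : Type) (s : seq I) (P : pred I) (a : I -> R) :
  (forall i, P i -> 0 <= a i <= 1) ->
  \prod_(i <- s | P i) (1 - a i) <=
    1 - \sum_(i <- s | P i) a i + (\sum_(i <- s | P i) a i) ^+ 2.
Proof.
move=> ha; elim: s => [|i s IH]; first by rewrite !big_nil expr0n /= subr0 addr0.
rewrite !big_cons; case: ifP => Pi //.
have /andP [a0 a1] := ha i Pi.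
set t := \sum_(j <- s | P j) a j in IH *.
have t0 : 0 <= t by apply: sumr_ge0 => j /ha /andP [].
set q := \prod_(j <- s | P j) (1 - a j) in IH *.
have : (1 - a i) * q <= (1 - a i) * (1 - t + t ^+ 2).
  by apply: ler_wpM2l => //; rewrite subr_ge0.
move=> H; apply: (le_trans H); rewrite expr2; nra.
Qed.

Section Main.
Variables (R : realType) (V : finType) (adj : rel V) (p : edge adj -> R).
Hypothesis p01 : forall e, 0 < p e <= 1.
Local Notation E := (edge adj).

Lemma p_ge0 f : 0 <= p f. Proof. by case/andP: (p01 f) => /ltW. Qed.
Lemma p_le1 f : p f <= 1. Proof. by case/andP: (p01 f). Qed.

Lemma hash_sum (c : E -> R) e : \sum_f hashimoto R f e * c f =
  \sum_(f | (ehead f == etail e) && (etail f != ehead e)) c f.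
Proof.
rewrite [RHS]big_mkcond; apply: eq_bigr => f _; rewrite /hashimoto.
by case: (_ && _); rewrite ?mul1r ?mul0r.
Qed.

Lemma F_mono (x y : E -> R) e : (forall f, 0 <= x f <= y f) ->
  0 <= Fmap p x e <= Fmap p y e.
Proof.
move=> hxy; have h f : 0 <= 1 - p f + p f * x f <= 1 - p f + p f * y f.
  have /andP [x0 xy] := hxy f.
  rewrite ler_wpDr ?mulr_ge0 ?subr_ge0 ?p_le1 ?p_ge0 //=.
  by rewrite lerD2l ler_wpM2l ?p_ge0.
apply/andP; split; last by apply: ler_prod => f _; apply: h.
by apply: prodr_ge0 => f _; case/andP: (h f).
Qed.

Lemma F_le (x y : E -> R) e : (forall f, 0 <= x f) -> (forall f, x f <= y f) ->
  Fmap p x e <= Fmap p y e.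
Proof.
move=> x0 xy; have H : forall f, 0 <= x f <= y f by move=> f; rewrite x0 xy.
by case/andP: (F_mono e H).
Qed.

Lemma F_ge0 (x : E -> R) e : (forall f, 0 <= x f) -> 0 <= Fmap p x e.
Proof.
move=> x0; have H : forall f, 0 <= x f <= x f by move=> f; rewrite x0 lexx.
by case/andP: (F_mono e H).
Qed.

Lemma super (v : E -> R) mu eps e : 1 < mu -> (forall f, 0 < v f) ->
  mu * v e <= \sum_f hashimoto R f e * p f * v f -> 0 <= eps ->
  eps * (\sum_f hashimoto R f e * p f * v f) <= 1 - mu^-1 ->
  (forall f, eps * v f <= 1) ->
  Fmap p (fun f => 1 - eps * v f) e <= 1 - eps * v e.
Proof.
move=> mu1 v0; under eq_bigr do rewrite -mulrA; rewrite hash_sum.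
set L := \sum_(f | _) _ => Hmu eps0 HL ev1.
rewrite /Fmap.
rewrite (eq_bigr (fun f => 1 - eps * (p f * v f))); last by move=> f _; ring.
apply: le_trans; first apply: prod_bound.
  move=> f _; apply/andP; split; first by rewrite !mulr_ge0 ?p_ge0 // ltW.
  apply: le_trans (ev1 f); apply: ler_wpM2l => //.
  by rewrite -[X in _ <= X]mul1r ler_wpM2r ?p_le1 // ltW.
rewrite -mulr_sumr -/L.
have L0 : 0 <= L by apply: sumr_ge0 => f _; rewrite mulr_ge0 ?p_ge0 ?ltW.
set t := eps * L in HL *.
have mu0 : 0 < mu by apply: lt_trans mu1.
have m0 : 0 < mu^-1 by rewrite invr_gt0.
have mm : mu * mu^-1 = 1 by rewrite divff // gt_eqF.
have t0 : 0 <= t by rewrite mulr_ge0.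
have H1 : eps * (mu * v e) <= t by apply: ler_wpM2l.
have H2 : t * mu^-1 <= t * (1 - t) by apply: ler_wpM2l => //; lra.
have H3 : eps * (mu * v e) * mu^-1 <= t * mu^-1 by apply: ler_wpM2r => //; exact: ltW.
have H4 : eps * (mu * v e) * mu^-1 = eps * v e.
  by rewrite mulrCA -mulrA mulrCA mm mulr1.
rewrite H4 in H3; rewrite expr2; nra.
Qed.
End Main.

Unset Implicit Arguments.
Set Strict Implicit.
Theorem theorem1 (R : realType) (V : finType) (adj : rel V)
    (p : edge adj -> R) :
  hashimoto_irreducible adj R ->
  (forall e, 0 < p e <= 1) ->
  1 < spectral_radius (jacobian p) ->
  exists Q : edge adj -> R,
    (forall e, 0 <= Q e <= 1) /\ Q <> (fun _ => 1) /\
    (forall e, Q e = Fmap p Q e).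
Proof.
move=> irr p01 rho1.
have p0 := p_ge0 p01.
have [mu [u [mu1 [u0 [[e0 ue0] Hu]]]]] := step1 p0 rho1.
pose a := fun e f : edge adj => hashimoto R f e * p f.
pose r := fun x y : edge adj => hashimoto R x y != 0.
have a0 : forall e f, 0 <= a e f.
  by move=> e f; rewrite /a /hashimoto mulr_ge0.
have ar : forall e f, r f e -> 0 < a e f.
  move=> e f; rewrite /r /a /hashimoto; case: (_ && _); rewrite /= ?eqxx // => _.
  by rewrite mul1r; case/andP: (p01 f).
have mu0 : 0 <= mu by rewrite ltW // (lt_trans ltr01).
have gu : Good a mu u by split.
have [v [v0 [_ Hv]]] := step2 a0 ar irr gu (ex_intro _ e0 ue0).
pose M := 1 + \sum_e (Lop a v e + v e).
have Lv0 : forall e, 0 <= Lop a v e.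
  by move=> e; apply: Lop_ge0 => // f; apply: ltW.
have sum0 : 0 <= \sum_e (Lop a v e + v e).
  by apply: sumr_ge0 => e _; rewrite addr_ge0 // ltW.
have M0 : 0 < M by rewrite /M ltr_wpDr.
have LM : forall e, Lop a v e + v e <= M.
  move=> e; rewrite /M (bigD1 e) //= addrCA ler_wpDr // addr_ge0 //.
  by apply: sumr_ge0 => f _; rewrite addr_ge0 // ltW.
pose c := 1 - mu^-1.
have mup : 0 < mu by apply: lt_trans mu1.
have c0 : 0 < c.
  by rewrite /c subr_gt0 invf_lt1.
have c1 : c < 1 by rewrite /c ltrBlDr ltrDl invr_gt0.
pose eps := c / M.
have eps0 : 0 < eps by rewrite divr_gt0.
have epsM : eps * M = c by rewrite /eps mulrVK // unitfE gt_eqF.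
have epsL : forall e, eps * Lop a v e <= c.
  move=> e; rewrite -epsM; apply: ler_wpM2l; first exact: ltW.
  by apply: le_trans _ (LM e); rewrite lerDl ltW.
have epsv : forall e, eps * v e <= c.
  move=> e; rewrite -epsM; apply: ler_wpM2l; first exact: ltW.
  by apply: le_trans _ (LM e); rewrite lerDr.
pose b := fun f => 1 - eps * v f.
have Fb : forall e, Fmap p b e <= b e.
  move=> e; apply: (super p01 mu1 v0 (Hv e) (ltW eps0)); first exact: (le_trans (epsL e)).
  by move=> f; apply: le_trans (epsv f) (ltW c1).
have b0 : forall e, 0 <= b e.
  by move=> e; rewrite /b subr_ge0 (le_trans (epsv e)) // ltW.
have b1 : forall e, b e < 1.
  by move=> e; rewrite /b ltrBlDr ltrDl mulr_gt0.
pose S := [set x : edge adj -> R | (forall e, 0 <= x e <= b e) /\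
                                  (forall e, x e <= Fmap p x e)].
have S0 : S (fun _ => 0).
  split=> e; first by rewrite lexx b0.
  by apply: F_ge0.
pose Q := fun e => sup [set x e | x in S].
have ne : forall e, [set x e | x in S] !=set0.
  by move=> e; exists 0; exists (fun _ => 0).
have hs : forall e, has_sup [set x e | x in S].
  move=> e; split => //; exists (b e) => y [x Sx <-].
  by case: Sx => /(_ e) /andP [].
have Qup : forall x, S x -> forall e, x e <= Q e.
  by move=> x Sx e; apply: sup_upper_bound (hs e) _ _; exists x.
have Qlub : forall e z, (forall x, S x -> x e <= z) -> Q e <= z.
  by move=> e z H; apply: ge_sup => // y [x Sx <-]; apply: H.
have Q0 : forall e, 0 <= Q e by move=> e; apply: (Qup _ S0).
have Qb : forall e, Q e <= b e.
  by move=> e; apply: Qlub => x [/(_ e) /andP [] _ +] _.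
have QF : forall e, Q e <= Fmap p Q e.
  move=> e; apply: Qlub => x [Hx Fx]; apply: le_trans (Fx e) _.
  apply: F_le => // f; first by case/andP: (Hx f).
  exact: Qup.
have FQ0 : forall e, 0 <= Fmap p Q e.
  by move=> e; apply: F_ge0.
have SFQ : S (Fmap p Q).
  split=> e.
    rewrite FQ0 /=; apply: le_trans (Fb e).
    by apply: F_le.
  by apply: F_le.
have QE : forall e, Q e = Fmap p Q e.
  by move=> e; apply/le_anti; rewrite QF Qup.
exists Q; split; [|split] => //.
  by move=> e; rewrite Q0 (le_trans (Qb e)) // ltW.
move=> Q1; have := b1 e0; rewrite ltNge.
by have := Qb e0; rewrite Q1 => ->.
Qed.
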